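(* Assume Assumptions 1–4 (stated in the context) hold, with the periodic boundary specification, and assume the discount factor $\beta$ is sufficiently large. Then there exists $L_1<\infty$, independent of $\theta,z,t$, such that for every $\theta\in\Theta$ the function $h_\theta$ is locally Lipschitz continuous with Lipschitz constant $L_1$.
   Context: Local Lipschitz continuity with constant $L$ means: there is $\delta>0$ such that $|f(y_1)-f(y_2)|\le L|y_1-y_2|$ whenever $|y_1-y_2|<\delta$. A state is $s=(x,z,t)$; policies $\pi_\theta(a\mid s)$, $a\in\{0,1\}$, $\theta\in\Theta$. $F$ is the distribution of $(Y(1),Y(0),W,X)$ (also the marginal of $x$); $r(x,1)=E[Y(1)-Y(0)\mid x]$. $G_0,G_1$ are known functions of $s$, $\lambda(t)>0$ is a known arrival rate and $\beta$ is a discount rate. Define $$\bar r_\theta(z,t)=E_{x\sim F}[r(x,1)\pi_\theta(1\mid s)],\qquad \bar G_\theta(z,t)=E_{x\sim F}[G_1\pi_\theta(1\mid s)+G_0\pi_\theta(0\mid s)].$$ Assume $\lambda,\bar G_\theta,\bar r_\theta$ are $T_p$-periodic in $t$. $h_\theta$ is the bounded, continuous, $T_p$-periodic (in $t$) viscosity solution on $\mathbb R\times\mathbb R$ of $\beta h-\lambda(t)\bar G_\theta\partial_z h-\partial_t h-\lambda(t)\bar r_\theta=0$. Assumption 1: $\bar G_\theta,\bar r_\theta$ are Lipschitz uniformly in $\theta$; $\lambda$ is bounded, Lipschitz and bounded away from 0; $|\bar r_\theta|,|\bar G_\theta|\le M$. Assumption 2: $|Y(a)|,|G_a(s)|\le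 M$; the classes $\{\pi_\theta(1\mid\cdot,z,t)\}$ and $\{\pi_\theta(a\mid\cdot,z,t)G_a(\cdot,z,t)\}$ (indexed by $(z,t),\theta$) are VC-subgraph with finite indices. Assumption 3: $Y(a,z,t)\equiv Y(a)$; the data are iid from $F$; $(Y(1),Y(0))\perp\!\!\!\perp W\mid X$; $p(x)=E[W\mid X=x]\in[\kappa,1-\kappa]$. Assumption 4: the nonparametric estimators of $E[Y(w)\mid X=x]$ and $p(x)$ converge in sup norm at rate $O_p(n^{-c})$ for some $c>0$ and in mean square at rate $n^{-\xi}$ for some $\xi>1/2$. *)

(* Defs.v *)
From Stdlib Require Import Reals Lra.
From Coquelicot Require Import Coquelicot.
Open Scope R_scope.

Definition dist2 (z1 t1 z2 t2 : R) : R :=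
  sqrt ((z1 - z2) ^ 2 + (t1 - t2) ^ 2).

Definition cont2_at (f : R -> R -> R) (z0 t0 : R) : Prop :=
  forall eps, 0 < eps -> exists delta, 0 < delta /\
    forall z t, dist2 z t z0 t0 < delta -> Rabs (f z t - f z0 t0) < eps.

Definition cont2 (f : R -> R -> R) : Prop := forall z t, cont2_at f z t.

Definition C1_with (phi phiz phit : R -> R -> R) : Prop :=
  cont2 phiz /\ cont2 phit /\
  (forall z t, is_derive (fun z' => phi z' t) z (phiz z t)) /\
  (forall z t, is_derive (fun t' => phi z t') t (phit z t)).

Definition loc_max2 (u : R -> R -> R) (z0 t0 : R) : Prop :=
  exists r, 0 < r /\ forall z t, dist2 z t z0 t0 < r -> u z t <= u z0 t0.
Definition loc_min2 (u : R -> R -> R) (z0 t0 : R) : Prop :=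
  exists r, 0 < r /\ forall z t, dist2 z t z0 t0 < r -> u z0 t0 <= u z t.

(* Hamiltonian of  beta h - lam(t) Gb(z,t) d_z h - d_t h - lam(t) rb(z,t) = 0 *)
Definition Ham (beta : R) (lam : R -> R) (Gb rb : R -> R -> R)
  (z t u pz pt : R) : R :=
  beta * u - lam t * Gb z t * pz - pt - lam t * rb z t.

Definition visc_sub beta lam Gb rb (h : R -> R -> R) : Prop :=
  forall phi phiz phit z0 t0, C1_with phi phiz phit ->
    loc_max2 (fun z t => h z t - phi z t) z0 t0 ->
    Ham beta lam Gb rb z0 t0 (h z0 t0) (phiz z0 t0) (phit z0 t0) <= 0.
Definition visc_super beta lam Gb rb (h : R -> R -> R) : Prop :=
  forall phi phiz phit z0 t0, C1_with phi phiz phit ->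
    loc_min2 (fun z t => h z t - phi z t) z0 t0 ->
    0 <= Ham beta lam Gb rb z0 t0 (h z0 t0) (phiz z0 t0) (phit z0 t0).
Definition visc_sol beta lam Gb rb h : Prop :=
  cont2 h /\ visc_sub beta lam Gb rb h /\ visc_super beta lam Gb rb h.

Definition lipschitz2 (L : R) (f : R -> R -> R) : Prop :=
  forall z1 t1 z2 t2, Rabs (f z1 t1 - f z2 t2) <= L * dist2 z1 t1 z2 t2.

Definition loc_lipschitz2 (L : R) (f : R -> R -> R) : Prop :=
  exists delta, 0 < delta /\
    forall z1 t1 z2 t2, dist2 z1 t1 z2 t2 < delta ->
      Rabs (f z1 t1 - f z2 t2) <= L * dist2 z1 t1 z2 t2.

Definition bounded2 (f : R -> R -> R) : Prop :=
  exists B, forall z t, Rabs (f z t) <= B.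

Definition periodic_t (Tp : R) (f : R -> R -> R) : Prop :=
  forall z t, f z (t + Tp) = f z t.

(* Main.v *)
Require Import Defs.
From Stdlib Require Import Reals Lra Psatz Classical ClassicalEpsilon List.
From Coquelicot Require Import Coquelicot.
Open Scope R_scope.

Lemma Rabs_le_sqrt u v : Rabs u <= sqrt (u ^ 2 + v ^ 2).
Proof.
  rewrite <- (sqrt_Rsqr_abs u). apply sqrt_le_1_alt. unfold Rsqr. nra.
Qed.

Lemma dist2_le a b c d : dist2 a b c d <= Rabs (a - c) + Rabs (b - d).
Proof.
  unfold dist2.
  assert (H0 : 0 <= Rabs (a - c) + Rabs (b - d)) by (pose proof (Rabs_pos (a-c)); pose proof (Rabs_pos (b-d)); lra).
  rewrite <- (sqrt_Rsqr _ H0). apply sqrt_le_1_alt. unfold Rsqr.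
  rewrite <- (pow2_abs (a - c)), <- (pow2_abs (b - d)).
  pose proof (Rabs_pos (a-c)); pose proof (Rabs_pos (b-d)). nra.
Qed.

Lemma dist2_ge1 a b c d : Rabs (a - c) <= dist2 a b c d.
Proof. apply Rabs_le_sqrt. Qed.

Lemma dist2_ge2 a b c d : Rabs (b - d) <= dist2 a b c d.
Proof. unfold dist2. rewrite Rplus_comm. apply Rabs_le_sqrt. Qed.

Lemma dist2_sym a b c d : dist2 a b c d = dist2 c d a b.
Proof. unfold dist2. f_equal. ring. Qed.

Lemma dist2_pos a b c d : 0 <= dist2 a b c d.
Proof. apply sqrt_pos. Qed.

Lemma S_lip c u v u' v' : 0 <= c ->
  Rabs (sqrt (c + u ^ 2 + v ^ 2) - sqrt (c + u' ^ 2 + v' ^ 2)) <= Rabs (u - u') + Rabs (v - v').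
Proof.
  intros Hc.
  set (A := sqrt (c + u ^ 2 + v ^ 2)). set (B := sqrt (c + u' ^ 2 + v' ^ 2)).
  assert (HA : 0 <= A) by apply sqrt_pos. assert (HB : 0 <= B) by apply sqrt_pos.
  assert (HA2 : A * A = c + u ^ 2 + v ^ 2) by (apply sqrt_sqrt; nra).
  assert (HB2 : B * B = c + u' ^ 2 + v' ^ 2) by (apply sqrt_sqrt; nra).
  assert (Hu : Rabs u <= A). { unfold A. rewrite <- (sqrt_Rsqr_abs u). apply sqrt_le_1_alt. unfold Rsqr. nra. }
  assert (Hv : Rabs v <= A). { unfold A. rewrite <- (sqrt_Rsqr_abs v). apply sqrt_le_1_alt. unfold Rsqr. nra. }
  assert (Hu' : Rabs u' <= B). { unfold B. rewrite <- (sqrt_Rsqr_abs u'). apply sqrt_le_1_alt. unfold Rsqr. nra. }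
  assert (Hv' : Rabs v' <= B). { unfold B. rewrite <- (sqrt_Rsqr_abs v'). apply sqrt_le_1_alt. unfold Rsqr. nra. }
  pose proof (Rabs_pos (u - u')). pose proof (Rabs_pos (v - v')).
  destruct (Req_dec (A + B) 0) as [HZ|HZ].
  { assert (A = 0) by lra. assert (B = 0) by lra.
    replace (A - B) with 0 by lra. rewrite Rabs_R0. lra. }
  assert (Hpos : 0 < A + B) by lra.
  assert (Heq : Rabs (A - B) * (A + B) = Rabs ((u - u') * (u + u') + (v - v') * (v + v'))).
  { rewrite <- (Rabs_pos_eq (A + B)) at 1 by lra. rewrite <- Rabs_mult. f_equal. nra. }
  assert (Hle : Rabs ((u - u') * (u + u') + (v - v') * (v + v')) <= (Rabs (u - u') + Rabs (v - v')) * (A + B)).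
  { eapply Rle_trans. apply Rabs_triang. rewrite !Rabs_mult.
    assert (Rabs (u + u') <= A + B) by (eapply Rle_trans; [apply Rabs_triang|lra]).
    assert (Rabs (v + v') <= A + B) by (eapply Rle_trans; [apply Rabs_triang|lra]).
    nra. }
  apply (Rmult_le_reg_r (A + B)); lra.
Qed.

Lemma c2d_cont2 f z t : continuity_2d_pt f z t -> cont2_at f z t.
Proof.
  intros H eps Heps. destruct (H (mkposreal eps Heps)) as [d Hd].
  exists d. split. apply cond_pos. intros u v Huv.
  apply Hd. eapply Rle_lt_trans. apply dist2_ge1. exact Huv.
  eapply Rle_lt_trans. apply dist2_ge2. exact Huv.
Qed.

Lemma cont2_lin A B f g : cont2 f -> cont2 g -> cont2 (fun z t => A * f z t + B * g z t).
Proof.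
  intros Hf Hg z t eps Heps.
  set (e := eps / (2 * (Rabs A + Rabs B + 1))).
  assert (He : 0 < e). { unfold e. pose proof (Rabs_pos A); pose proof (Rabs_pos B).
    apply Rdiv_lt_0_compat; lra. }
  destruct (Hf z t e He) as [d1 [Hd1 H1]]. destruct (Hg z t e He) as [d2 [Hd2 H2]].
  exists (Rmin d1 d2). split. apply Rmin_pos; lra. intros u v Huv.
  pose proof (H1 u v (Rlt_le_trans _ _ _ Huv (Rmin_l _ _))) as E1.
  pose proof (H2 u v (Rlt_le_trans _ _ _ Huv (Rmin_r _ _))) as E2.
  replace (A * f u v + B * g u v - (A * f z t + B * g z t)) with
    (A * (f u v - f z t) + B * (g u v - g z t)) by ring.
  eapply Rle_lt_trans. apply Rabs_triang. rewrite !Rabs_mult.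
  pose proof (Rabs_pos A); pose proof (Rabs_pos B).
  pose proof (Rabs_pos (f u v - f z t)); pose proof (Rabs_pos (g u v - g z t)).
  assert (Rabs A * Rabs (f u v - f z t) <= Rabs A * e) by nra.
  assert (Rabs B * Rabs (g u v - g z t) <= Rabs B * e) by nra.
  assert ((Rabs A + Rabs B) * e < eps).
  { unfold e. apply (Rmult_lt_reg_r (2 * (Rabs A + Rabs B + 1))). lra.
    field_simplify. nra. lra. }
  nra.
Qed.

Lemma C1_lin A B f fz ft g gz gt : C1_with f fz ft -> C1_with g gz gt ->
  C1_with (fun z t => A * f z t + B * g z t) (fun z t => A * fz z t + B * gz z t)
    (fun z t => A * ft z t + B * gt z t).
Proof.
  intros [Hf1 [Hf2 [Hf3 Hf4]]] [Hg1 [Hg2 [Hg3 Hg4]]].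
  split. apply cont2_lin; auto. split. apply cont2_lin; auto.
  split; intros z t.
  - apply (is_derive_plus (fun z' => A * f z' t) (fun z' => B * g z' t)).
    apply is_derive_scal. apply Hf3. apply is_derive_scal. apply Hg3.
  - apply (is_derive_plus (fun t' => A * f z t') (fun t' => B * g z t')).
    apply is_derive_scal. apply Hf4. apply is_derive_scal. apply Hg4.
Qed.

Definition S (c a b z t : R) := sqrt (c + (z - a) ^ 2 + (t - b) ^ 2).

Lemma S_pos c a b z t : 0 < c -> 0 < S c a b z t.
Proof. intros. unfold S. apply sqrt_lt_R0. pose proof (pow2_ge_0 (z-a)); pose proof (pow2_ge_0 (t-b)); lra. Qed.

Lemma S_cont c a b z t : 0 < c -> continuity_2d_pt (S c a b) z t.
Proof.
  intros Hc. unfold S.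
  apply (continuity_1d_2d_pt_comp sqrt (fun z t => c + (z - a) ^ 2 + (t - b) ^ 2)).
  apply continuity_pt_sqrt. pose proof (pow2_ge_0 (z-a)); pose proof (pow2_ge_0 (t-b)); lra.
  apply continuity_2d_pt_plus. apply continuity_2d_pt_plus.
  apply continuity_2d_pt_const.
  apply (continuity_2d_pt_ext (fun u v => (u - a) * ((u - a) * 1))). intros; simpl; ring.
  apply continuity_2d_pt_mult. apply continuity_2d_pt_minus. apply continuity_2d_pt_id1. apply continuity_2d_pt_const.
  apply continuity_2d_pt_mult. apply continuity_2d_pt_minus. apply continuity_2d_pt_id1. apply continuity_2d_pt_const.
  apply continuity_2d_pt_const.
  apply (continuity_2d_pt_ext (fun u v => (v - b) * ((v - b) * 1))). intros; simpl; ring.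
  apply continuity_2d_pt_mult. apply continuity_2d_pt_minus. apply continuity_2d_pt_id2. apply continuity_2d_pt_const.
  apply continuity_2d_pt_mult. apply continuity_2d_pt_minus. apply continuity_2d_pt_id2. apply continuity_2d_pt_const.
  apply continuity_2d_pt_const.
Qed.

Lemma C1_S c a b : 0 < c ->
  C1_with (S c a b) (fun z t => (z - a) / S c a b z t) (fun z t => (t - b) / S c a b z t).
Proof.
  intros Hc. split; [|split; [|split]].
  - intros z t. apply c2d_cont2. unfold Rdiv. apply continuity_2d_pt_mult.
    apply continuity_2d_pt_minus. apply continuity_2d_pt_id1. apply continuity_2d_pt_const.
    apply continuity_2d_pt_inv. apply S_cont; auto. apply Rgt_not_eq. apply S_pos; auto.
  - intros z t. apply c2d_cont2. unfold Rdiv. apply continuity_2d_pt_mult.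
    apply continuity_2d_pt_minus. apply continuity_2d_pt_id2. apply continuity_2d_pt_const.
    apply continuity_2d_pt_inv. apply S_cont; auto. apply Rgt_not_eq. apply S_pos; auto.
  - intros z t. unfold S. auto_derive. pose proof (pow2_ge_0 (z-a)); pose proof (pow2_ge_0 (t-b)); lra.
    pose proof (S_pos c a b z t Hc). unfold S in *.
    replace (c + (z + - a) * ((z + - a) * 1) + (t - b) * ((t - b) * 1)) with (c + (z - a) ^ 2 + (t - b) ^ 2) by ring. field. lra.
  - intros z0 t. unfold S. auto_derive. pose proof (pow2_ge_0 (z0-a)); pose proof (pow2_ge_0 (t-b)); lra.
    pose proof (S_pos c a b z0 t Hc). unfold S in *. replace (c + (z0 - a) * ((z0 - a) * 1) + (t + - b) * ((t + - b) * 1)) with (c + (z0 - a) ^ 2 + (t - b) ^ 2) by ring. field. lra.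
Qed.

Lemma S_ge1 c a b z t : 0 <= c -> Rabs (z - a) <= S c a b z t.
Proof. intros. unfold S. rewrite <- (sqrt_Rsqr_abs (z - a)). apply sqrt_le_1_alt. unfold Rsqr. pose proof (pow2_ge_0 (t-b)). simpl. lra. Qed.
Lemma S_ge2 c a b z t : 0 <= c -> Rabs (t - b) <= S c a b z t.
Proof. intros. unfold S. rewrite <- (sqrt_Rsqr_abs (t - b)). apply sqrt_le_1_alt. unfold Rsqr. pose proof (pow2_ge_0 (z-a)). simpl. lra. Qed.
Lemma S_ge_dist c a b z t : 0 <= c -> dist2 z t a b <= S c a b z t.
Proof. intros. unfold S, dist2. apply sqrt_le_1_alt. lra. Qed.
Lemma S_le_dist c a b z t : 0 <= c -> S c a b z t <= dist2 z t a b + sqrt c.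
Proof.
  intros. unfold S, dist2.
  pose proof (sqrt_pos ((z - a) ^ 2 + (t - b) ^ 2)). pose proof (sqrt_pos c).
  rewrite <- (sqrt_Rsqr (sqrt ((z - a) ^ 2 + (t - b) ^ 2) + sqrt c)) by lra.
  apply sqrt_le_1_alt. unfold Rsqr.
  assert (sqrt ((z - a) ^ 2 + (t - b) ^ 2) * sqrt ((z - a) ^ 2 + (t - b) ^ 2) = (z - a) ^ 2 + (t - b) ^ 2) by (apply sqrt_sqrt; pose proof (pow2_ge_0 (z-a)); pose proof (pow2_ge_0 (t-b)); lra).
  assert (sqrt c * sqrt c = c) by (apply sqrt_sqrt; lra).
  pose proof (Rmult_le_pos _ _ H0 H1). lra.
Qed.
Lemma S_sym c a b z t : S c a b z t = S c z t a b.
Proof. unfold S. f_equal. ring. Qed.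
Lemma S_ratio1 c a b z t : 0 < c -> Rabs ((z - a) / S c a b z t) <= 1.
Proof.
  intros Hc. pose proof (S_pos c a b z t Hc). unfold Rdiv. rewrite Rabs_mult, Rabs_inv, (Rabs_pos_eq (S _ _ _ _ _)) by lra.
  apply (Rmult_le_reg_r (S c a b z t)). lra. field_simplify. 2: lra. pose proof (S_ge1 c a b z t). lra.
Qed.
Lemma S_ratio2 c a b z t : 0 < c -> Rabs ((t - b) / S c a b z t) <= 1.
Proof.
  intros Hc. pose proof (S_pos c a b z t Hc). unfold Rdiv. rewrite Rabs_mult, Rabs_inv, (Rabs_pos_eq (S _ _ _ _ _)) by lra.
  apply (Rmult_le_reg_r (S c a b z t)). lra. field_simplify. 2: lra. pose proof (S_ge2 c a b z t). lra.
Qed.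

Lemma max_box (n : nat) (Phi : Compactness.Tn n R -> R) (a b x0 : Compactness.Tn n R)
  (Hx0 : bounded_n n a b x0)
  (Husc : forall p eps, 0 < eps -> exists d, 0 < d /\
      forall q, close_n n d q p -> Phi q < Phi p + eps) :
  exists p, bounded_n n a b p /\ forall q, bounded_n n a b q -> Phi q <= Phi p.
Proof.
  apply NNPP. intros Hno.
  assert (Hex : forall p, exists qd : Compactness.Tn n R * posreal,
    bounded_n n a b (fst qd) /\
    (bounded_n n a b p -> forall x, close_n n (snd qd) x p -> Phi x < Phi (fst qd))).
  { intros p. destruct (classic (bounded_n n a b p)) as [Hp|Hp].
    - assert (exists q, bounded_n n a b q /\ Phi p < Phi q) as [q [Hq1 Hq2]].
      { apply NNPP. intros H1. apply Hno. exists p. split; auto.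
        intros q Hq. apply Rnot_lt_le. intros H2. apply H1. exists q. auto. }
      destruct (Husc p (Phi q - Phi p)) as [d [Hd1 Hd2]]. lra.
      exists (q, mkposreal d Hd1). simpl. split; auto. intros _ x Hx.
      specialize (Hd2 x Hx). lra.
    - exists (x0, mkposreal 1 Rlt_0_1). simpl. split; auto. intros H; contradiction. }
  set (sel := fun p => proj1_sig (constructive_indefinite_description _ (Hex p))).
  assert (Hsel : forall p, bounded_n n a b (fst (sel p)) /\
    (bounded_n n a b p -> forall x, close_n n (snd (sel p)) x p -> Phi x < Phi (fst (sel p)))).
  { intros p. unfold sel. destruct (constructive_indefinite_description _ (Hex p)) as [qd Hqd]. exact Hqd. }
  apply (compactness_list n a b (fun p => snd (sel p))). intros [l Hl].
  set (m := fold_right (fun t acc => Rmax (Phi (fst (sel t))) acc) (Phi x0) l).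
  assert (F1 : exists w, bounded_n n a b w /\ Phi w = m).
  { unfold m. clear Hl m. induction l as [|t l IH]; simpl.
    - exists x0. auto.
    - destruct IH as [w [Hw1 Hw2]]. rewrite <- Hw2.
      destruct (Rle_dec (Phi (fst (sel t))) (Phi w)).
      + exists w. split; auto. rewrite Rmax_right; auto.
      + exists (fst (sel t)). split. apply Hsel. rewrite Rmax_left; auto. lra. }
  assert (F2 : forall t, In t l -> Phi (fst (sel t)) <= m).
  { unfold m. clear Hl m F1. induction l as [|t' l IH]; simpl; intros t Ht.
    - contradiction.
    - destruct Ht as [<-|Ht]. apply Rmax_l. eapply Rle_trans. apply IH; auto. apply Rmax_r. }
  destruct F1 as [w [Hw1 Hw2]].
  destruct (Hl w Hw1) as [t [Ht1 [Ht2 Ht3]]].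
  pose proof (proj2 (Hsel t) Ht2 w Ht3). pose proof (F2 t Ht1). lra.
Qed.

Definition P4 (x s y u : R) : Compactness.Tn 4 R := (x, (s, (y, (u, tt)))).

Definition PhiF (h : R -> R -> R) (K e al : R) (p : Compactness.Tn 4 R) : R :=
  match p with (x, (s, (y, (u, _)))) =>
    h x s - h y u - K * S e y u x s - al * (S 1 0 0 x s + S 1 0 0 y u) end.

Lemma Phi_usc h K e al : cont2 h -> 0 <= K -> 0 <= al -> 0 <= e ->
  forall p eps, 0 < eps -> exists d, 0 < d /\
      forall q, close_n 4 d q p -> PhiF h K e al q < PhiF h K e al p + eps.
Proof.
  intros Hc HK Ha He p eps Heps.
  destruct p as [x [s [y [u []]]]].
  destruct (Hc x s (eps / 4)) as [d1 [Hd1 H1]]. lra.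
  destruct (Hc y u (eps / 4)) as [d2 [Hd2 H2]]. lra.
  set (d3 := eps / (8 * (K + al) + 1)).
  assert (Hd3 : 0 < d3) by (unfold d3; apply Rdiv_lt_0_compat; lra).
  exists (Rmin (Rmin (d1 / 2) (d2 / 2)) d3). split.
  { apply Rmin_pos. apply Rmin_pos; lra. lra. }
  intros [x' [s' [y' [u' []]]]] Hq. simpl in Hq.
  destruct Hq as [Hx [Hs [Hy [Hu _]]]].
  set (dd := Rmin (Rmin (d1 / 2) (d2 / 2)) d3) in *.
  assert (dd <= d1 / 2) by (unfold dd; eapply Rle_trans; [apply Rmin_l|apply Rmin_l]).
  assert (dd <= d2 / 2) by (unfold dd; eapply Rle_trans; [apply Rmin_l|apply Rmin_r]).
  assert (dd <= d3) by (unfold dd; apply Rmin_r).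
  assert (E1 : Rabs (h x' s' - h x s) < eps / 4).
  { apply H1. eapply Rle_lt_trans. apply dist2_le. lra. }
  assert (E2 : Rabs (h y' u' - h y u) < eps / 4).
  { apply H2. eapply Rle_lt_trans. apply dist2_le. lra. }
  assert (E3 : Rabs (S e y' u' x' s' - S e y u x s) <= 4 * dd).
  { unfold S. eapply Rle_trans. apply S_lip; auto.
    eapply Rle_trans. apply Rplus_le_compat.
    replace (x' - y' - (x - y)) with ((x' - x) - (y' - y)) by ring. apply Rabs_triang.
    replace (s' - u' - (s - u)) with ((s' - s) - (u' - u)) by ring. apply Rabs_triang.
    rewrite !Rabs_Ropp. lra. }
  assert (E4 : Rabs (S 1 0 0 x' s' - S 1 0 0 x s) <= 2 * dd).
  { unfold S. eapply Rle_trans. apply S_lip; lra.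
    replace (x' - 0 - (x - 0)) with (x' - x) by ring. replace (s' - 0 - (s - 0)) with (s' - s) by ring. lra. }
  assert (E5 : Rabs (S 1 0 0 y' u' - S 1 0 0 y u) <= 2 * dd).
  { unfold S. eapply Rle_trans. apply S_lip; lra.
    replace (y' - 0 - (y - 0)) with (y' - y) by ring. replace (u' - 0 - (u - 0)) with (u' - u) by ring. lra. }
  assert (E6 : (4 * K + 4 * al) * dd < eps / 2).
  { apply Rle_lt_trans with ((4 * K + 4 * al) * d3). apply Rmult_le_compat_l; lra.
    unfold d3. apply (Rmult_lt_reg_r (8 * (K + al) + 1)). lra. field_simplify; lra. }
  simpl.
  apply Rabs_def2 in E1. apply Rabs_def2 in E2.
  apply Rabs_le_between in E3. apply Rabs_le_between in E4. apply Rabs_le_between in E5.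
  destruct E3, E4, E5.
  assert (K * (S e y u x s - S e y' u' x' s') <= K * (4 * dd)) by (apply Rmult_le_compat_l; lra).
  assert (al * (S 1 0 0 x s - S 1 0 0 x' s') <= al * (2 * dd)) by (apply Rmult_le_compat_l; lra).
  assert (al * (S 1 0 0 y u - S 1 0 0 y' u') <= al * (2 * dd)) by (apply Rmult_le_compat_l; lra).
  lra.
Qed.

Lemma step beta (lam : R -> R) (G r h : R -> R -> R) B CF LF Lf K e al
  (Hb : 0 < beta) (HK : 0 <= K) (HKb : K * LF + Lf <= K * beta) (He : 0 < e) (Ha : 0 < al)
  (HCF : forall z t, Rabs (lam t * G z t) <= CF)
  (HF : forall z1 t1 z2 t2, Rabs (lam t1 * G z1 t1 - lam t2 * G z2 t2) <= LF * dist2 z1 t1 z2 t2)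
  (Hf : forall z1 t1 z2 t2, Rabs (lam t1 * r z1 t1 - lam t2 * r z2 t2) <= Lf * dist2 z1 t1 z2 t2)
  (HB : forall z t, Rabs (h z t) <= B)
  (Hc : cont2 h) (Hsub : visc_sub beta lam G r h) (Hsup : visc_super beta lam G r h) :
  forall z1 t1 z2 t2, h z1 t1 - h z2 t2 <=
    K * S e z2 t2 z1 t1 + al * (S 1 0 0 z1 t1 + S 1 0 0 z2 t2) + 2 * al * (CF + 1) / beta.
Proof.
  intros z1 t1 z2 t2.
  set (Phi := PhiF h K e al).
  set (c0 := Phi (P4 0 0 0 0)).
  assert (HB0 : 0 <= B) by (eapply Rle_trans; [apply Rabs_pos|apply (HB 0 0)]).
  assert (Hc0 : c0 <= 0).
  { unfold c0, Phi, PhiF, P4. pose proof (S_pos e 0 0 0 0 He). pose proof (S_pos 1 0 0 0 0 Rlt_0_1).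
    assert (0 <= K * S e 0 0 0 0) by (apply Rmult_le_pos; lra).
    assert (0 <= al * (S 1 0 0 0 0 + S 1 0 0 0 0)) by (apply Rmult_le_pos; lra). lra. }
  set (Rad := (2 * B - c0) / al).
  assert (HRad : 0 <= Rad) by (unfold Rad; apply Rdiv_le_0_compat; lra).
  assert (Hbox : forall x s y u, c0 <= Phi (P4 x s y u) -> bounded_n 4 (P4 (-Rad) (-Rad) (-Rad) (-Rad)) (P4 Rad Rad Rad Rad) (P4 x s y u)).
  { intros x s y u H. unfold Phi, PhiF, P4 in H.
    pose proof (S_pos e y u x s He).
    assert (0 <= K * S e y u x s) by (apply Rmult_le_pos; lra).
    pose proof (HB x s) as Hx. pose proof (HB y u) as Hy.
    apply Rabs_le_between in Hx. apply Rabs_le_between in Hy.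
    assert (al * (S 1 0 0 x s + S 1 0 0 y u) <= 2 * B - c0) by lra.
    assert (Hg : S 1 0 0 x s + S 1 0 0 y u <= Rad).
    { unfold Rad. apply (Rmult_le_reg_l al). lra. field_simplify; lra. }
    pose proof (S_pos 1 0 0 x s Rlt_0_1). pose proof (S_pos 1 0 0 y u Rlt_0_1).
    pose proof (S_ge1 1 0 0 x s). pose proof (S_ge2 1 0 0 x s).
    pose proof (S_ge1 1 0 0 y u). pose proof (S_ge2 1 0 0 y u).
    replace (x - 0) with x in * by ring. replace (s - 0) with s in * by ring.
    replace (y - 0) with y in * by ring. replace (u - 0) with u in * by ring.
    assert (Rabs x <= Rad) by lra. assert (Rabs s <= Rad) by lra.
    assert (Rabs y <= Rad) by lra. assert (Rabs u <= Rad) by lra.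
    apply Rabs_le_between in H5. apply Rabs_le_between in H6.
    apply Rabs_le_between in H7. apply Rabs_le_between in H8.
    simpl. repeat split. all: lra. }
  destruct (max_box 4 Phi (P4 (-Rad) (-Rad) (-Rad) (-Rad)) (P4 Rad Rad Rad Rad) (P4 0 0 0 0))
    as [p0 [Hp0 Hmax]].
  { simpl. repeat split. all: lra. }
  { apply Phi_usc; [exact Hc|lra|lra|lra]. }
  assert (Hglob : forall x s y u, Phi (P4 x s y u) <= Phi p0).
  { intros x s y u. destruct (Rle_dec c0 (Phi (P4 x s y u))) as [H|H].
    - apply Hmax. apply Hbox. exact H.
    - apply Rle_trans with c0. lra. apply Hmax. simpl. repeat split. all: lra. }
  destruct p0 as [x1 [s1 [x2 [s2 []]]]].
  change (Phi (x1, (s1, (x2, (s2, tt))))) with (Phi (P4 x1 s1 x2 s2)) in Hglob.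
  assert (Hgl : forall x s y u, h x s - h y u - K * S e y u x s - al * (S 1 0 0 x s + S 1 0 0 y u)
      <= h x1 s1 - h x2 s2 - K * S e x2 s2 x1 s1 - al * (S 1 0 0 x1 s1 + S 1 0 0 x2 s2)).
  { intros x s y u. exact (Hglob x s y u). }
  clear Hglob Hmax Hp0 Hbox.
  pose proof (Hsub (fun z t => K * S e x2 s2 z t + al * S 1 0 0 z t)
    (fun z t => K * ((z - x2) / S e x2 s2 z t) + al * ((z - 0) / S 1 0 0 z t))
    (fun z t => K * ((t - s2) / S e x2 s2 z t) + al * ((t - 0) / S 1 0 0 z t)) x1 s1) as Hs.
  specialize (Hs (C1_lin K al _ _ _ _ _ _ (C1_S e x2 s2 He) (C1_S 1 0 0 Rlt_0_1))).
  assert (Hs' : loc_max2 (fun z t => h z t - (K * S e x2 s2 z t + al * S 1 0 0 z t)) x1 s1).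
  { exists 1. split. lra. intros z t _. pose proof (Hgl z t x2 s2). lra. }
  specialize (Hs Hs'). clear Hs'.
  pose proof (Hsup (fun z t => (- K) * S e x1 s1 z t + (- al) * S 1 0 0 z t)
    (fun z t => (- K) * ((z - x1) / S e x1 s1 z t) + (- al) * ((z - 0) / S 1 0 0 z t))
    (fun z t => (- K) * ((t - s1) / S e x1 s1 z t) + (- al) * ((t - 0) / S 1 0 0 z t)) x2 s2) as Hp.
  specialize (Hp (C1_lin (-K) (-al) _ _ _ _ _ _ (C1_S e x1 s1 He) (C1_S 1 0 0 Rlt_0_1))).
  assert (Hp' : loc_min2 (fun z t => h z t - ((- K) * S e x1 s1 z t + (- al) * S 1 0 0 z t)) x2 s2).
  { exists 1. split. lra. intros z t _. pose proof (Hgl x1 s1 z t).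
    rewrite (S_sym e z t x1 s1) in H. rewrite (S_sym e x2 s2 x1 s1) in H. lra. }
  specialize (Hp Hp'). clear Hp'.
  unfold Ham in Hs, Hp.
  rewrite <- (S_sym e x2 s2 x1 s1) in Hp.
  set (psi := S e x2 s2 x1 s1) in *.
  assert (Hpsi : 0 < psi) by apply S_pos, He.
  set (g1 := S 1 0 0 x1 s1) in *. set (g2 := S 1 0 0 x2 s2) in *.
  set (u1 := (x1 - x2) / psi) in *.
  replace ((x2 - x1) / psi) with (- u1) in Hp by (unfold u1; field; lra).
  replace ((s2 - s1) / psi) with (- ((s1 - s2) / psi)) in Hp by (field; lra).
  set (v1 := (s1 - s2) / psi) in *.
  set (a1 := (x1 - 0) / g1) in *. set (b1 := (s1 - 0) / g1) in *.
  set (a2 := (x2 - 0) / g2) in *. set (b2 := (s2 - 0) / g2) in *.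
  set (F1 := lam s1 * G x1 s1) in *. set (F2 := lam s2 * G x2 s2) in *.
  set (D := dist2 x1 s1 x2 s2).
  assert (Hu1 : Rabs u1 <= 1) by (apply S_ratio1; lra).
  assert (Ha1 : Rabs a1 <= 1) by (apply S_ratio1; lra).
  assert (Hb1 : Rabs b1 <= 1) by (apply S_ratio2; lra).
  assert (Ha2 : Rabs a2 <= 1) by (apply S_ratio1; lra).
  assert (Hb2 : Rabs b2 <= 1) by (apply S_ratio2; lra).
  assert (HF12 : Rabs (F1 - F2) <= LF * D) by apply HF.
  assert (Hf12 : lam s1 * r x1 s1 - lam s2 * r x2 s2 <= Lf * D).
  { eapply Rle_trans. apply Rle_abs. apply Hf. }
  assert (HD : 0 <= D) by apply dist2_pos.
  assert (HDpsi : D <= psi) by (apply S_ge_dist; lra).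
  assert (HF1 : Rabs F1 <= CF) by apply HCF. assert (HF2 : Rabs F2 <= CF) by apply HCF.
  assert (B1 : u1 * (F1 - F2) <= LF * D).
  { eapply Rle_trans. apply Rle_abs. rewrite Rabs_mult.
    pose proof (Rabs_pos u1). pose proof (Rabs_pos (F1 - F2)).
    apply Rle_trans with (1 * Rabs (F1 - F2)). apply Rmult_le_compat_r; lra. lra. }
  assert (B1' : K * (u1 * (F1 - F2)) <= K * (LF * D)) by (apply Rmult_le_compat_l; lra).
  assert (Bp : forall F a, Rabs F <= CF -> Rabs a <= 1 -> F * a <= CF).
  { intros F a HF0 Ha0. eapply Rle_trans. apply Rle_abs. rewrite Rabs_mult.
    pose proof (Rabs_pos F). pose proof (Rabs_pos a).
    apply Rle_trans with (Rabs F * 1). apply Rmult_le_compat_l; lra. lra. }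
  assert (B2 : al * (F1 * a1 + b1 + F2 * a2 + b2) <= al * (2 * (CF + 1))).
  { apply Rmult_le_compat_l. lra.
    pose proof (Bp F1 a1 HF1 Ha1). pose proof (Bp F2 a2 HF2 Ha2).
    apply Rabs_le_between in Hb1. apply Rabs_le_between in Hb2. lra. }
  assert (B4 : (K * LF + Lf) * D <= K * beta * D) by (apply Rmult_le_compat_r; lra).
  assert (B5 : K * D <= K * psi) by (apply Rmult_le_compat_l; lra).
  assert (Hcomb : beta * (h x1 s1 - h x2 s2) <= K * (u1 * (F1 - F2)) + al * (F1 * a1 + b1 + F2 * a2 + b2)
      + (lam s1 * r x1 s1 - lam s2 * r x2 s2)).
  { assert (E : lam s1 * G x1 s1 * (K * u1 + al * a1) = K * (u1 * F1) + al * (F1 * a1)) by (unfold F1; ring).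
    assert (E' : lam s2 * G x2 s2 * (- K * - u1 + - al * a2) = K * (u1 * F2) - al * (F2 * a2)) by (unfold F2; ring).
    fold F1 in E. fold F2 in E'.
    rewrite E in Hs. rewrite E' in Hp.
    assert (E2 : K * (u1 * (F1 - F2)) = K * (u1 * F1) - K * (u1 * F2)) by ring.
    assert (E3 : beta * (h x1 s1 - h x2 s2) = beta * h x1 s1 - beta * h x2 s2) by ring.
    lra. }
  assert (Hk : beta * (h x1 s1 - h x2 s2) <= beta * (K * psi + 2 * al * (CF + 1) / beta)).
  { assert (E4 : beta * (K * psi + 2 * al * (CF + 1) / beta) = K * beta * psi + al * (2 * (CF + 1))) by (field; lra).
    rewrite E4.
    assert (E5 : (K * LF + Lf) * D = K * (LF * D) + Lf * D) by ring.
    assert (E6 : K * beta * psi = beta * (K * psi)) by ring.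
    assert (E7 : K * beta * D = beta * (K * D)) by ring.
    assert (beta * (K * D) <= beta * (K * psi)) by (apply Rmult_le_compat_l; lra).
    lra. }
  apply Rmult_le_reg_l in Hk; [|lra].
  pose proof (Hgl z1 t1 z2 t2).
  assert (0 <= al * (g1 + g2)).
  { apply Rmult_le_pos. lra. unfold g1, g2. pose proof (S_pos 1 0 0 x1 s1 Rlt_0_1). pose proof (S_pos 1 0 0 x2 s2 Rlt_0_1). lra. }
  lra.
Qed.

Lemma doubling beta (lam : R -> R) (G r h : R -> R -> R) B CF LF Lf K
  (Hb : 0 < beta) (HK : 0 <= K) (HKb : K * LF + Lf <= K * beta)
  (HCF : forall z t, Rabs (lam t * G z t) <= CF)
  (HF : forall z1 t1 z2 t2, Rabs (lam t1 * G z1 t1 - lam t2 * G z2 t2) <= LF * dist2 z1 t1 z2 t2)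
  (Hf : forall z1 t1 z2 t2, Rabs (lam t1 * r z1 t1 - lam t2 * r z2 t2) <= Lf * dist2 z1 t1 z2 t2)
  (HB : forall z t, Rabs (h z t) <= B)
  (Hc : cont2 h) (Hsub : visc_sub beta lam G r h) (Hsup : visc_super beta lam G r h) :
  forall z1 t1 z2 t2, h z1 t1 - h z2 t2 <= K * dist2 z1 t1 z2 t2.
Proof.
  intros z1 t1 z2 t2.
  apply Rnot_lt_le. intros Hlt.
  set (eta := h z1 t1 - h z2 t2 - K * dist2 z1 t1 z2 t2).
  assert (Heta : 0 < eta) by (unfold eta; lra).
  assert (HCF0 : 0 <= CF) by (eapply Rle_trans; [apply Rabs_pos|apply (HCF 0 0)]).
  set (X := S 1 0 0 z1 t1 + S 1 0 0 z2 t2 + 2 * (CF + 1) / beta).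
  assert (HX : 0 <= X).
  { unfold X. pose proof (S_pos 1 0 0 z1 t1 Rlt_0_1). pose proof (S_pos 1 0 0 z2 t2 Rlt_0_1).
    assert (0 <= 2 * (CF + 1) / beta) by (apply Rdiv_le_0_compat; lra). lra. }
  set (q := eta / (4 * (K + 1))).
  assert (Hq : 0 < q) by (unfold q; apply Rdiv_lt_0_compat; lra).
  set (al := eta / (4 * (X + 1))).
  assert (Hal : 0 < al) by (unfold al; apply Rdiv_lt_0_compat; lra).
  assert (He : 0 < Rsqr q) by (unfold Rsqr; nra).
  pose proof (step beta lam G r h B CF LF Lf K (Rsqr q) al Hb HK HKb He Hal HCF HF Hf HB Hc Hsub Hsup z1 t1 z2 t2) as Hst.
  pose proof (S_le_dist (Rsqr q) z2 t2 z1 t1 (Rlt_le _ _ He)) as Hle.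
  rewrite sqrt_Rsqr in Hle by lra.
  assert (E1 : al * (S 1 0 0 z1 t1 + S 1 0 0 z2 t2) + 2 * al * (CF + 1) / beta = al * X) by (unfold X; field; lra).
  assert (E2 : K * q <= eta / 4).
  { unfold q. apply (Rmult_le_reg_r (4 * (K + 1))). lra. field_simplify; nra. }
  assert (E3 : al * X < eta / 4).
  { unfold al. apply (Rmult_lt_reg_r (4 * (X + 1))). lra. field_simplify; nra. }
  assert (K * S (Rsqr q) z2 t2 z1 t1 <= K * (dist2 z1 t1 z2 t2 + q)) by (apply Rmult_le_compat_l; lra).
  unfold eta in *. lra.
Qed.

Lemma prod_lip (lam : R -> R) (G : R -> R -> R) Ll hi LG M
  (Hl : forall t1 t2, Rabs (lam t1 - lam t2) <= Ll * Rabs (t1 - t2))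
  (Hbd : forall t, 0 < lam t /\ lam t <= hi)
  (HG : lipschitz2 LG G) (HGb : forall z t, Rabs (G z t) <= M) :
  forall z1 t1 z2 t2, Rabs (lam t1 * G z1 t1 - lam t2 * G z2 t2) <=
    (hi * Rabs LG + Rabs M * Rabs Ll) * dist2 z1 t1 z2 t2.
Proof.
  intros z1 t1 z2 t2.
  set (D := dist2 z1 t1 z2 t2).
  assert (HD : 0 <= D) by apply dist2_pos.
  assert (Ht : Rabs (t1 - t2) <= D) by apply dist2_ge2.
  replace (lam t1 * G z1 t1 - lam t2 * G z2 t2) with
    (lam t1 * (G z1 t1 - G z2 t2) + G z2 t2 * (lam t1 - lam t2)) by ring.
  eapply Rle_trans. apply Rabs_triang. rewrite !Rabs_mult.
  destruct (Hbd t1) as [H1 H2]. rewrite (Rabs_pos_eq (lam t1)) by lra.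
  pose proof (HG z1 t1 z2 t2) as HG1. fold D in HG1.
  assert (LG * D <= Rabs LG * D) by (apply Rmult_le_compat_r; [lra|apply Rle_abs]).
  pose proof (Hl t1 t2) as Hl1.
  pose proof (Rabs_pos (t1 - t2)). pose proof (Rabs_pos (lam t1 - lam t2)).
  assert (Ll * Rabs (t1 - t2) <= Rabs Ll * D).
  { apply Rle_trans with (Rabs Ll * Rabs (t1 - t2)). apply Rmult_le_compat_r; [lra|apply Rle_abs].
    apply Rmult_le_compat_l; [apply Rabs_pos|lra]. }
  assert (HGM : Rabs (G z2 t2) <= Rabs M) by (eapply Rle_trans; [apply HGb|apply Rle_abs]).
  pose proof (Rabs_pos (G z1 t1 - G z2 t2)). pose proof (Rabs_pos (G z2 t2)).
  assert (lam t1 * Rabs (G z1 t1 - G z2 t2) <= hi * (Rabs LG * D)).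
  { apply Rmult_le_compat; lra. }
  assert (Rabs (G z2 t2) * Rabs (lam t1 - lam t2) <= Rabs M * (Rabs Ll * D)).
  { apply Rmult_le_compat; lra. }
  lra.
Qed.

Theorem lemmaF6
  (Theta : Type) (lam : R -> R) (Gb rb : Theta -> R -> R -> R) (M Tp : R)
  (* Assumption 1 *)
  (HGlip : exists LG, forall th, lipschitz2 LG (Gb th))
  (Hrlip : exists Lr, forall th, lipschitz2 Lr (rb th))
  (Hlam_lip : exists Ll, forall t1 t2, Rabs (lam t1 - lam t2) <= Ll * Rabs (t1 - t2))
  (Hlam_bd : exists lo hi, 0 < lo /\ forall t, lo <= lam t /\ lam t <= hi)
  (HGbd : forall th z t, Rabs (Gb th z t) <= M)
  (Hrbd : forall th z t, Rabs (rb th z t) <= M)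
  (* periodic specification *)
  (HTp : 0 < Tp)
  (Hlam_per : forall t, lam (t + Tp) = lam t)
  (HG_per : forall th, periodic_t Tp (Gb th))
  (Hr_per : forall th, periodic_t Tp (rb th)) :
  exists beta0 : R, forall beta : R, beta0 < beta ->
  forall h : Theta -> R -> R -> R,
    (forall th, bounded2 (h th) /\ periodic_t Tp (h th) /\
                visc_sol beta lam (Gb th) (rb th) (h th)) ->
    exists L1 : R, forall th, loc_lipschitz2 L1 (h th).
Proof.
  destruct HGlip as [LG HG]. destruct Hrlip as [Lr Hr].
  destruct Hlam_lip as [Ll Hl]. destruct Hlam_bd as [lo [hi [Hlo Hbd]]].
  assert (Hhi : 0 < hi) by (destruct (Hbd 0); lra).
  assert (Hbd' : forall t, 0 < lam t /\ lam t <= hi) by (intros t; destruct (Hbd t); split; lra).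
  set (LF := hi * Rabs LG + Rabs M * Rabs Ll).
  set (Lf := hi * Rabs Lr + Rabs M * Rabs Ll).
  assert (HLF : 0 <= LF).
  { unfold LF. pose proof (Rabs_pos LG). pose proof (Rabs_pos M). pose proof (Rabs_pos Ll).
    assert (0 <= hi * Rabs LG) by (apply Rmult_le_pos; lra).
    assert (0 <= Rabs M * Rabs Ll) by (apply Rmult_le_pos; lra). lra. }
  assert (HLf : 0 <= Lf).
  { unfold Lf. pose proof (Rabs_pos Lr). pose proof (Rabs_pos M). pose proof (Rabs_pos Ll).
    assert (0 <= hi * Rabs Lr) by (apply Rmult_le_pos; lra).
    assert (0 <= Rabs M * Rabs Ll) by (apply Rmult_le_pos; lra). lra. }
  exists LF. intros beta Hbeta h Hh.
  set (K := Lf / (beta - LF)).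
  assert (HK : 0 <= K) by (unfold K; apply Rdiv_le_0_compat; lra).
  assert (HKb : K * LF + Lf <= K * beta) by (unfold K; right; field; lra).
  exists K. intros th.
  destruct (Hh th) as [[B HB] [_ [Hc [Hs Hp]]]].
  assert (HCF : forall z t, Rabs (lam t * Gb th z t) <= hi * Rabs M).
  { intros z t. rewrite Rabs_mult. destruct (Hbd' t).
    rewrite (Rabs_pos_eq (lam t)) by lra. apply Rmult_le_compat; try lra. apply Rabs_pos.
    eapply Rle_trans. apply HGbd. apply Rle_abs. }
  pose proof (doubling beta lam (Gb th) (rb th) (h th) B (hi * Rabs M) LF Lf K
    ltac:(lra) HK HKb HCF (prod_lip lam (Gb th) Ll hi LG M Hl Hbd' (HG th) (HGbd th))
    (prod_lip lam (rb th) Ll hi Lr M Hl Hbd' (Hr th) (Hrbd th)) HB Hc Hs Hp) as Hd.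
  exists 1. split. lra. intros z1 t1 z2 t2 _.
  apply Rabs_le. pose proof (Hd z1 t1 z2 t2). pose proof (Hd z2 t2 z1 t1).
  rewrite (dist2_sym z2 t2 z1 t1) in H0. lra.
Qed.
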